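(* 1. $K_0=\mathbb X$. 2. $K_{\nu_2}\subset K_{\nu_1}$ whenever $0\le\nu_1\le\nu_2$. 3. For every $\nu>1$, $K_\nu=\operatorname{argmin}_{z\in\mathbb X}\mathcal R(z)+\ker(A)$. 4. $\mathrm{dom}(\mathcal R)+\ker(A)\subset K_{1/2}$.
   Context: Standing setting: $\mathbb X$ real Banach space, $\tau$ a topology with $(\mathbb X,\tau)$ locally convex Hausdorff; $\mathcal R:\mathbb X\to(-\infty,\infty]$ proper convex with $\tau$-compact sublevel sets $\{\mathcal R\le\lambda\}$, $\lambda\in\mathbb R$; $\mathbb Y$ real Hilbert space; $A:\mathbb X\to\mathbb Y$ linear, $\tau$-to-weak continuous. $T_\alpha(x,g):=\frac1{2\alpha}\|g-Ax\|_{\mathbb Y}^2+\mathcal R(x)$, $R_\alpha(g):=\operatorname{argmin}_{x\in\mathrm{dom}(\mathcal R)}T_\alpha(x,g)$. For $\nu\ge0$, $\varrho_\nu(x):=\sup\{\alpha^{-\nu}\|Ax-Ax_\alpha\|_{\mathbb Y}:\alpha>0,x_\alpha\in R_\alpha(Ax)\}\in[0,\infty]$ and $K_\nu:=\{x\in\mathbb X:\varrho_\nu(x)<\infty\}$. *)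

(* Defs.v *)
From HB Require Import structures.
From mathcomp Require Import all_boot all_order all_algebra.
From mathcomp Require Import all_classical all_reals all_analysis.
Set Implicit Arguments. Unset Strict Implicit. Unset Printing Implicit Defensive.
Import Order.TTheory GRing.Theory Num.Theory.
Import numFieldNormedType.Exports.
Local Open Scope classical_set_scope.
Local Open Scope ring_scope.

(* ip is an inner product on the (complete) normed space Y inducing its norm:
   (Y, ip) is then a real Hilbert space. *)
Definition inner_product_of_norm (R : realType) (Y : normedModType R)
    (ip : Y -> Y -> R) : Prop :=
  [/\ forall y z, ip y z = ip z y,
      forall a y1 y2 z, ip (a *: y1 + y2) z = a * ip y1 z + ip y2 z &
      forall y, ip y y = `|y| ^+ 2].

(* A : X -> Y is continuous from (X, tau) to Y with its weak topology, i.e.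
   x |-> <A x, y> is tau-continuous for every y (Riesz). *)
Definition tau_weak_continuous (R : realType) (X : topologicalType)
    (Y : normedModType R) (ip : Y -> Y -> R) (A : X -> Y) : Prop :=
  forall y : Y, continuous (fun x => ip (A x) y).

Definition dom_ext (X : Type) (R : realType) (F : X -> \bar R) : set X :=
  [set x | F x < +oo]%E.

Definition proper_convex (R : realType) (X : lmodType R) (F : X -> \bar R) :=
  [/\ forall x, (F x != -oo)%E,
      exists x, (F x < +oo)%E &
      forall (x y : X) (t : R), 0 <= t <= 1 ->
        (F (t *: x + (1 - t) *: y)%R <= t%:E * F x + (1 - t)%:E * F y)%E].

Definition Tik (R : realType) (X : lmodType R) (Y : normedModType R)
    (A : X -> Y) (F : X -> \bar R) (alpha : R) (x : X) (g : Y) : \bar R :=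
  ((`|g - A x| ^+ 2 / (2 * alpha))%:E + F x)%E.

Definition Ralpha (R : realType) (X : lmodType R) (Y : normedModType R)
    (A : X -> Y) (F : X -> \bar R) (alpha : R) (g : Y) : set X :=
  [set x | dom_ext F x /\
     forall z, dom_ext F z -> (Tik A F alpha x g <= Tik A F alpha z g)%E].

Definition varrho (R : realType) (X : lmodType R) (Y : normedModType R)
    (A : X -> Y) (F : X -> \bar R) (nu : R) (x : X) : \bar R :=
  ereal_sup [set r | exists alpha xa, 0 < alpha /\ Ralpha A F alpha (A x) xa /\
                      r = ((alpha `^ (- nu)) * `|A x - A xa|)%:E].

Definition Kset (R : realType) (X : lmodType R) (Y : normedModType R)
    (A : X -> Y) (F : X -> \bar R) (nu : R) : set X :=
  [set x | (varrho A F nu x < +oo)%E].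

(* Main.v *)
Require Import Defs.
From HB Require Import structures.
From mathcomp Require Import all_boot all_order all_algebra.
From mathcomp Require Import all_classical all_reals all_analysis.
From mathcomp Require Import ring lra.
Import Order.TTheory GRing.Theory Num.Theory.
Import numFieldNormedType.Exports.
Local Open Scope classical_set_scope.
Local Open Scope ring_scope.
Set Implicit Arguments. Unset Strict Implicit. Unset Printing Implicit Defensive.
Lemma vec_id (K : pzRingType) (V : lmodType K) (a b c : V) (t : K) :
  a - (t *: b + (1 - t) *: c) = (a - c) - t *: (b - c).
Proof.
rewrite scalerBr scalerBl scale1r opprB opprD opprB.
rewrite -!addrA; congr (_ + _); rewrite addrCA [RHS]addrCA; congr (_ + _); exact: addrC.
Qed.
Lemma vec_id2 (K : pzRingType) (V : lmodType K) (a b c : V) :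
  b - c = (a - c) - (a - b).
Proof. by rewrite opprB [RHS]addrC addrA subrK. Qed.
Section IP.
Variables (R : realType) (Y : normedModType R) (ip : Y -> Y -> R).
Hypothesis Hip : inner_product_of_norm ip.

Lemma ip_sym y z : ip y z = ip z y.
Proof. by case: Hip. Qed.
Lemma ip_lin a y1 y2 z : ip (a *: y1 + y2) z = a * ip y1 z + ip y2 z.
Proof. by case: Hip. Qed.
Lemma ip_norm y : ip y y = `|y| ^+ 2.
Proof. by case: Hip. Qed.
Lemma ip0l z : ip 0 z = 0.
Proof.
have := ip_lin 1 0 0 z; rewrite scaler0 addr0 mul1r => H.
by apply: (addrI (ip 0 z)); rewrite addr0 -H.
Qed.
Lemma ipDl x y z : ip (x + y) z = ip x z + ip y z.
Proof. by rewrite -[x in LHS]scale1r ip_lin mul1r. Qed.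
Lemma ipZl a x z : ip (a *: x) z = a * ip x z.
Proof. by have := ip_lin a x 0 z; rewrite addr0 ip0l addr0. Qed.
Lemma ipDr x y z : ip z (x + y) = ip z x + ip z y.
Proof. by rewrite ip_sym ipDl ![ip _ z]ip_sym. Qed.
Lemma ipZr a x z : ip z (a *: x) = a * ip z x.
Proof. by rewrite ip_sym ipZl ip_sym. Qed.
Lemma ipNl x z : ip (- x) z = - ip x z.
Proof. by rewrite -scaleN1r ipZl mulN1r. Qed.
Lemma ipBl x y z : ip (x - y) z = ip x z - ip y z.
Proof. by rewrite ipDl ipNl. Qed.
Lemma ipBr x y z : ip z (x - y) = ip z x - ip z y.
Proof. by rewrite ip_sym ipBl ![ip _ z]ip_sym. Qed.

Lemma norm_sqrB x y : `|x - y| ^+ 2 = `|x| ^+ 2 - 2 * ip x y + `|y| ^+ 2.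
Proof.
rewrite -!ip_norm ipBl !ipBr (ip_sym y x); ring.
Qed.

Lemma ip_le x y : ip x y <= `|x| * `|y|.
Proof.
have := ip_norm (`|y| *: x - `|x| *: y).
rewrite ipBl !ipBr !ipZl !ipZr !ip_norm (ip_sym y x) => H.
have H0 : 0 <= `|x| * `|y| * (`|x| * `|y| - ip x y).
  have : 0 <= (Num.norm (`|y| *: x - `|x| *: y)) ^+ 2 by rewrite sqr_ge0.
  by rewrite -H; nra.
have [Hp|] := ltP 0 (`|x| * `|y|).
  by rewrite -subr_ge0; move: H0; rewrite pmulr_rge0.
move=> Hle; have /eqP : `|x| * `|y| = 0 by apply/eqP; rewrite eq_le Hle mulr_ge0.
rewrite mulf_eq0 !normr_eq0.
by case/orP=> /eqP->; rewrite ?ip0l ?(ip_sym x) ?ip0l normr0 ?mul0r ?mulr0.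
Qed.

Lemma ip_abs x y : `|ip x y| <= `|x| * `|y|.
Proof.
rewrite ler_norml ip_le andbT lerNl -ipNl -(normrN x).
exact: ip_le.
Qed.
End IP.
Section MinEx.
Variables (R : realType) (T : topologicalType).
Hypothesis hT : hausdorff_space T.

Lemma cluster_closed (G : set_system T) (S : set T) z :
  cluster G z -> G S -> closed S -> S z.
Proof. by move=> Gz GS cS; apply: cS => B Bz; apply: Gz. Qed.
Arguments cluster_closed {G S z}.

Lemma exists_min (G : T -> \bar R)
  (Gc : forall l : R, compact [set x | (G x <= l%:E)%E]) (x0 : T)
  (Gx0 : (G x0 < +oo)%E) : exists z, forall w, (G z <= G w)%E.
Proof.
have [[w Hw]|Hn] := pselect (exists w, G w = -oo%E).
  by exists w => w'; rewrite Hw leNye.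
have Hx0 : G x0 = (fine (G x0))%:E.
  move: Gx0; case E: (G x0) => //= _; exfalso; apply: Hn; by exists x0.
pose I := [set l : R | exists y, (G y <= l%:E)%E].
pose B := fun l : R => [set x | (G x <= l%:E)%E].
have FF : Filter (filter_from I B).
  apply: filter_from_filter; first by exists (fine (G x0)), x0; rewrite -Hx0.
  move=> l1 l2 [y1 H1] [y2 H2]; have [le12|lt21] := leP l1 l2.
    by exists l1; [exists y1|move=> x /= Hx; split=> //; apply: (le_trans Hx); rewrite lee_fin].
  exists l2; [by exists y2|move=> x /= Hx; split=> //; apply: (le_trans Hx)].
  by rewrite lee_fin ltW.
have PF : ProperFilter (filter_from I B).
  by apply: filter_from_proper => l [y Hy]; exists y.
have KF : filter_from I B (B (fine (G x0))).
  by exists (fine (G x0)) => //; exists x0; rewrite -Hx0.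
have [z [Kz Cz]] := Gc (fine (G x0)) _ PF KF.
exists z => w.
case Hw: (G w) => [r| |]; last 2 first.
- exact: leey.
- by exfalso; apply: Hn; exists w.
have : B r z.
  apply: (cluster_closed Cz); first by exists r => //; exists w; rewrite Hw.
  exact: compact_closed hT (Gc r).
by [].
Qed.
End MinEx.
Section Main.
Variables (R : realType) (X : tvsType R) (Y : normedModType R) (ip : Y -> Y -> R).
Hypothesis Hip : inner_product_of_norm ip.
Variable (A : {linear X -> Y}).
Hypothesis A_cont : tau_weak_continuous ip A.
Variable (F : X -> \bar R).
Hypothesis X_hausdorff : hausdorff_space X.
Hypothesis F_proper_convex : proper_convex F.
Hypothesis F_compact : forall lambda : R, compact [set x | (F x <= lambda%:E)%E].

Lemma lsc_a (al : R) (g : Y) (y : X) (mu : R) : 0 < al ->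
  mu < `|g - A y| ^+ 2 / (2 * al) ->
  nbhs y [set y' | mu < `|g - A y'| ^+ 2 / (2 * al)].
Proof.
move=> al0 Hmu.
have [mu0|mu0] := ltP mu 0.
  apply: (@filterS _ _ (nbhs_filter y) setT); last exact: filterT.
  move=> y' _ /=; apply: (lt_le_trans mu0).
  by rewrite divr_ge0 // ?sqr_ge0 // mulr_ge0 // ltW.
set p := 2 * al * mu.
have p0 : 0 <= p by rewrite /p mulr_ge0 // mulr_ge0 // ltW.
have a0 : 0 < 2 * al by rewrite mulr_gt0.
set u := A y - g.
set q := `|u|.
have Hq : p < q ^+ 2.
  by move: Hmu; rewrite ltr_pdivlMr // /q /u -normrN opprB /p mulrC.
set c : R := (q ^+ 2 + p) / 2.
pose N := [set y' | c + ip g u < ip (A y') u].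
have oN : open N.
  apply: (@open_comp _ _ (fun y' => ip (A y') u) [set r | c + ip g u < r]); last exact: open_gt.
  by move=> x _; apply: A_cont.
have Ny : N y.
  rewrite /N /=.
  have : ip (A y) u - ip g u = q ^+ 2 by rewrite -ipBl // -/u ip_norm.
  move=> H; rewrite -ltrBrDr H /c; lra.
apply: (@filterS _ _ (nbhs_filter y) N); last exact: (open_nbhs_nbhs (conj oN Ny)).
move=> y' /= Hy'.
have Hy2 : c < ip (A y' - g) u by rewrite ipBl // ltrBrDr.
pose e := `|A y' - g|.
have Hle : ip (A y' - g) u <= e * q by exact: ip_le.
have q0 : 0 < q by have := normr_ge0 u; rewrite -/q; nra.
have e2 : p < e ^+ 2.
  have c0 : 0 <= c by rewrite /c; lra.
  have hc : p * q ^+ 2 <= c ^+ 2 by rewrite /c; nra.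
  have heq : c < e * q by lra.
  nra.
rewrite ltr_pdivlMr // -normrN opprB -/e mulrC.
by move: e2; rewrite /p.
Qed.

Lemma Tik_closed (al : R) (g : Y) (lam : R) : 0 < al ->
  closed [set y | (Tik A F al y g <= lam%:E)%E].
Proof.
move=> al0 y Cy /=; rewrite leNgt; apply/negP => Hgt.
pose ay := `|g - A y| ^+ 2 / (2 * al).
have [mu [Hmu1 Hmu2]] : exists mu, mu < ay /\ ((lam - mu)%:E < F y)%E.
  move: Hgt; rewrite /Tik -/ay; case E: (F y) => [r| |] /=.
  - rewrite -EFinD lte_fin => H; exists ((ay + lam - r) / 2).
    by split; [lra | rewrite lte_fin; lra].
  - by move=> _; exists (ay - 1); split; [lra | exact: ltey].
  - by rewrite addeNy.
have N1 : nbhs y (~` [set y' | (F y' <= (lam - mu)%:E)%E]).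
  apply: open_nbhs_nbhs; split.
    exact: closed_openC (compact_closed X_hausdorff (@F_compact (lam - mu))).
  by rewrite /= => H; move: Hmu2; rewrite ltNge H.
have N2 := lsc_a al0 Hmu1.
have [y' [Hy'1 [Hy'2 Hy'3]]] := Cy _ (filterI N1 N2).
move: Hy'3 => /= Hy'3.
move: Hy'1 Hy'2; rewrite /Tik /=; case: (F y') => [r'| |] /=.
- rewrite -EFinD !lee_fin => H1 H2; apply: H2; lra.
- by rewrite addey // leye_eq.
- by move=> _ H2; apply: H2; exact: leNye.
Qed.

Lemma F_le_Tik al g y : 0 < al -> (F y <= Tik A F al y g)%E.
Proof.
move=> al0; rewrite /Tik; case: (F y) => [r| |] //=.
by rewrite -EFinD lee_fin lerDr divr_ge0 // ?sqr_ge0 // mulr_ge0 // ltW.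
Qed.

Lemma Tik_lt_pinfty al g y : (F y < +oo)%E -> (Tik A F al y g < +oo)%E.
Proof. by rewrite /Tik; case: (F y) => [r| |] //= _; rewrite ltey. Qed.

Lemma Tik_pinfty al g y : (Tik A F al y g < +oo)%E -> (F y < +oo)%E.
Proof. by rewrite /Tik; case: (F y) => [r| |] //= _; rewrite ltey. Qed.

Lemma R_nonempty al g : 0 < al -> exists xa, Ralpha A F al g xa.
Proof.
move=> al0.
have [x1 Hx1] : exists x, (F x < +oo)%E by case: F_proper_convex.
have Tc : forall l : R, compact [set y | (Tik A F al y g <= l%:E)%E].
  move=> l; apply: (subclosed_compact (Tik_closed (g:=g) (lam:=l) al0) (@F_compact l)).
  by move=> y /= Hy; apply: le_trans Hy; apply: F_le_Tik.
have [z Hz] := exists_min X_hausdorff Tc (Tik_lt_pinfty al g Hx1).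
exists z; split; last by move=> w _; exact: Hz.
apply: (Tik_pinfty (al := al) (g := g)).
exact: le_lt_trans (Hz x1) (Tik_lt_pinfty al g Hx1).
Qed.

Lemma F_min : exists z0 (m : R), F z0 = m%:E /\ forall w, (m%:E <= F w)%E.
Proof.
have [x1 Hx1] : exists x, (F x < +oo)%E by case: F_proper_convex.
have [z Hz] := exists_min X_hausdorff F_compact Hx1.
have Hn : forall x, F x != -oo%E by case: F_proper_convex.
exists z, (fine (F z)).
have Hf : F z = (fine (F z))%:E.
  move: (le_lt_trans (Hz x1) Hx1) (Hn z); case: (F z) => //.
by split => // w; rewrite -Hf.
Qed.

Lemma basic_ineq al g xa z (m r : R) : 0 < al -> Ralpha A F al g xa ->
  (forall w, (m%:E <= F w)%E) -> F z = r%:E ->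
  `|g - A xa| ^+ 2 / (2 * al) + m <= `|g - A z| ^+ 2 / (2 * al) + r.
Proof.
move=> al0 [Hd Hopt] Hm Fz.
have Hz : dom_ext F z by rewrite /dom_ext /= Fz ltey.
have := Hopt z Hz; have := Hm xa; move: Hd; rewrite /dom_ext /Tik /= Fz.
case: (F xa) => [s| |] //= _.
  by rewrite !lee_fin => H1 H2; lra.
Qed.

Lemma dist_le al g xa z0 (m : R) : 0 < al -> Ralpha A F al g xa ->
  F z0 = m%:E -> (forall w, (m%:E <= F w)%E) ->
  `|g - A xa| <= `|g - A z0|.
Proof.
move=> al0 Hxa Fz0 Hm.
have := basic_ineq al0 Hxa Hm Fz0.
rewrite lerD2r ler_pM2r ?invr_gt0 ?mulr_gt0 // => H.
have := normr_ge0 (g - A xa); have := normr_ge0 (g - A z0); nra.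
Qed.

Lemma varrho_bound nu x (M : R) :
  (forall al xa, 0 < al -> Ralpha A F al (A x) xa ->
     al `^ (- nu) * `|A x - A xa| <= M) -> Kset A F nu x.
Proof.
move=> HM; rewrite /Kset /varrho /=.
apply: (@le_lt_trans _ _ M%:E); last exact: ltey.
apply: ge_ereal_sup => r [al [xa [al0 [H ->]]]].
by rewrite lee_fin; apply: HM.
Qed.

Lemma Kset_bound nu x : Kset A F nu x -> exists M : R,
  forall al xa, 0 < al -> Ralpha A F al (A x) xa ->
     al `^ (- nu) * `|A x - A xa| <= M.
Proof.
rewrite /Kset /varrho /=.
set S := [set r | _].
have Hs := @ereal_sup_ubound _ S.
case E: (ereal_sup S) => [M| |] // _.
  exists M => al xa al0 H.
  have := Hs _ (ex_intro _ al (ex_intro _ xa (conj al0 (conj H erefl)))).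
  by rewrite E lee_fin.
exists 0 => al xa al0 H.
have := Hs _ (ex_intro _ al (ex_intro _ xa (conj al0 (conj H erefl)))).
by rewrite E.
Qed.

Lemma part1 : Kset A F 0 = [set: X].
Proof.
have [z0 [m [Fz0 Hm]]] := F_min.
apply/seteqP; split => // x _.
apply: (@varrho_bound 0 x `|A x - A z0|) => al xa al0 H.
by rewrite oppr0 powRr0 mul1r; apply: dist_le H Fz0 Hm.
Qed.

Lemma part2 nu1 nu2 : 0 <= nu1 -> nu1 <= nu2 -> Kset A F nu2 `<=` Kset A F nu1.
Proof.
move=> nu10 nu12 x /Kset_bound [M2 HM2].
have [z0 [m [Fz0 Hm]]] := F_min.
apply: (@varrho_bound nu1 x (Num.max M2 `|A x - A z0|)) => al xa al0 H.
have d0 := normr_ge0 (A x - A xa).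
have [al1|al1] := leP al 1.
  rewrite le_max; apply/orP; left; apply: le_trans (HM2 _ _ al0 H).
  apply: ler_wpM2r => //; apply: ger_powR; first by rewrite al0 al1.
  by rewrite lerN2.
rewrite le_max; apply/orP; right.
apply: le_trans (dist_le al0 H Fz0 Hm).
rewrite -[X in _ <= X]mul1r; apply: ler_wpM2r => //.
rewrite -(powRr0 al); apply: ler_powR; first exact: ltW.
by rewrite oppr_le0.
Qed.

Lemma part4 : [set x | exists z k, dom_ext F z /\ A k = 0 /\ x = z + k] `<=` Kset A F (1 / 2).
Proof.
move=> x [z [k [Hz [Ak ->]]]].
have [z0 [m [Fz0 Hm]]] := F_min.
have Hn : F z != -oo%E by case: F_proper_convex.
have [r Fz] : exists r : R, F z = r%:E.
  by move: Hz Hn; rewrite /dom_ext /=; case: (F z) => // r; exists r.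
have Axz : A (z + k) = A z by rewrite linearD Ak addr0.
apply: (@varrho_bound (1/2) (z + k) (1 + 2 * (r - m))) => al xa al0 H.
rewrite Axz in H *.
have := basic_ineq al0 H Hm Fz.
rewrite subrr normr0 expr0n /= mul0r add0r => Hb.
set d := `|A z - A xa| in Hb *.
set e := al `^ (- (1 / 2)) * d.
have e0 : 0 <= e by apply: mulr_ge0; [exact: powR_ge0 | exact: normr_ge0].
have e2 : e ^+ 2 = d ^+ 2 / al.
  rewrite /e exprMn mulrC; congr (_ * _).
  rewrite -powR_mulrn ?powR_ge0 // -powRrM.
  have -> : - (1 / 2) * 2%:R = -1 :> R by field.
  by rewrite powR_inv1 // ltW.
have Hd : d ^+ 2 / al <= 2 * (r - m).
  move: Hb; rewrite invfM mulrA => Hb.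
  have : d ^+ 2 / al / 2 <= r - m by lra.
  rewrite ler_pdivrMr //; lra.
nra.
Qed.

Lemma part3a nu : [set x | exists z k, (forall w, (F z <= F w)%E) /\ A k = 0 /\ x = z + k]
  `<=` Kset A F nu.
Proof.
move=> x [z [k [Hz [Ak ->]]]].
have [z0 [m [Fz0 Hm]]] := F_min.
have Fz : F z = m%:E by apply/eqP; rewrite eq_le Hm -Fz0 Hz.
have Axz : A (z + k) = A z by rewrite linearD Ak addr0.
apply: (@varrho_bound nu (z + k) 0) => al xa al0 H.
rewrite Axz in H *.
have := basic_ineq al0 H Hm Fz.
rewrite subrr normr0 expr0n /= mul0r add0r => Hb.
have H0 : `|A z - A xa| ^+ 2 / (2 * al) <= 0 by lra.
have H2 : `|A z - A xa| ^+ 2 <= 0.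
  by move: H0; rewrite pmulr_lle0 // invr_gt0 mulr_gt0.
have -> : `|A z - A xa| = 0.
  by have := normr_ge0 (A z - A xa); nra.
by rewrite mulr0.
Qed.

Lemma SG al xa x z0 (m Bd : R) : 0 < al -> al <= 1 -> Ralpha A F al (A x) xa ->
  F z0 = m%:E -> (forall w, (m%:E <= F w)%E) -> `|A x - A xa| <= Bd -> `|A x - A xa| <= `|A x - A z0| ->
  exists s, F xa = s%:E /\
    s - m <= Bd * (2 * `|A x - A z0|) / al + al * (2 * `|A x - A z0|) ^+ 2 / 2.
Proof.
move=> al0 al1 Hxa Fz0 Hm HBd Hdist.
have [Hdxa Hopt] := Hxa.
have Hn : forall x, F x != -oo%E by case: F_proper_convex.
have [s Fs] : exists s, F xa = s%:E.
  by move: Hdxa (Hn xa); rewrite /dom_ext /=; case: (F xa) => // s; exists s.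
exists s; split => //.
set D := 2 * `|A x - A z0|.
set t := al ^+ 2.
have t0 : 0 < t by rewrite /t exprn_gt0.
have t1 : t <= 1 by rewrite /t; nra.
set yt := t *: z0 + (1 - t) *: xa.
have Hconv : (F yt <= (t * m + (1 - t) * s)%:E)%E.
  case: F_proper_convex => _ _ /(_ z0 xa t); rewrite t1 ltW //= Fz0 Fs.
  by move=> /(_ erefl); rewrite -!EFinM -EFinD.
have [u Fu] : exists u, F yt = u%:E.
  by move: Hconv (Hn yt); case: (F yt) => // u; exists u.
have Hyt : dom_ext F yt by rewrite /dom_ext /= Fu ltey.
have := Hopt _ Hyt; rewrite /Tik Fs Fu -!EFinD lee_fin.
move: Hconv; rewrite Fu lee_fin => Hu.
set r := A x - A xa; set d := A z0 - A xa.
have Hv : A x - A yt = r - t *: d.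
  by rewrite /yt linearD [A (t *: z0)]linearZ [A ((1 - t) *: xa)]linearZ; exact: vec_id.
rewrite Hv (norm_sqrB Hip r) (ipZr Hip) normrZ (ger0_norm (ltW t0)).
have Hd : `|d| <= D.
  have -> : d = (A x - A xa) - (A x - A z0).
    exact: vec_id2.
  apply: le_trans (ler_normB _ _) _; rewrite /D; lra.
have Hip2 : - ip r d <= Bd * D.
  apply: le_trans (_ : `|r| * `|d| <= _).
    by rewrite -normrN -ipNl //; apply: ip_le.
  apply: ler_pM => //; exact: normr_ge0.
set P := `|r| ^+ 2; set ipv := ip r d; set nd := `|d|.
have nd0 : 0 <= nd by exact: normr_ge0.
set k := (2 * al)^-1.
have k0 : 0 < k by rewrite /k invr_gt0 mulr_gt0.
have kal : k * (2 * al) = 1 by rewrite /k mulVf // gt_eqF // mulr_gt0.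
move=> H.
have H2 : t * (s - m) <= t * (k * (- 2 * ipv + t * nd ^+ 2)).
  have -> : t * (k * (- 2 * ipv + t * nd ^+ 2)) = 
    (P - 2 * (t * ipv) + (t * nd) ^+ 2) * k - P * k by ring.
  clear -H Hu; clearbody P ipv nd k t; lra.
rewrite ler_pM2l // in H2.
have E1 : Bd * D / al = 2 * k * Bd * D.
  rewrite /k; field; rewrite gt_eqF //.
rewrite E1.
have E2 : k * t = al / 2 by rewrite /k /t; field; rewrite gt_eqF.
have H3 : k * t * nd ^+ 2 <= k * t * D ^+ 2.
  apply: ler_wpM2l; first by rewrite E2 divr_ge0 // ltW.
  by rewrite ler_sqr // ?nnegrE //; apply: le_trans Hd.
have : al * D ^+ 2 / 2 = k * t * D ^+ 2 by rewrite E2; ring.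
move=> ->.
have H4 : k * (- ipv) <= k * (Bd * D) by apply: ler_wpM2l => //; exact: ltW.
clear -H2 H3 H4; clearbody ipv nd k t D; nra.
Qed.
Lemma small_lem (nu : R) : 1 < nu -> forall eta : R, 0 < eta ->
  exists2 delta : R, 0 < delta & forall al : R, 0 < al -> al < delta ->
  [/\ al <= 1, al <= eta & al `^ (nu - 1) <= eta].
Proof.
move=> nu1 eta eta0.
have nu0 : 0 < nu - 1 by rewrite subr_gt0.
exists (Num.min 1 (Num.min eta (eta `^ (nu - 1)^-1)))=> [|al al0].
  by rewrite !lt_min ltr01 eta0 powR_gt0.
rewrite !lt_min => /and3P [H1 H2 H3]; split; [exact: ltW | exact: ltW |].
apply: (@le_trans _ _ ((eta `^ (nu - 1)^-1) `^ (nu - 1))).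
  apply: ge0_ler_powR; rewrite ?ltW // ?nnegrE ?ltW // ?powR_ge0 //.
  exact: powR_gt0.
by rewrite -powRrM mulVf ?gt_eqF // powRr1 // ltW.
Qed.
Lemma part3b nu : 1 < nu -> Kset A F nu `<=`
  [set x | exists z k, (forall w, (F z <= F w)%E) /\ A k = 0 /\ x = z + k].
Proof.
move=> nu1 x /Kset_bound [M HM].
have [z0 [m [Fz0 Hm]]] := F_min.
have nu0 : 0 < nu by apply: lt_trans nu1.
have Hn : forall x, F x != -oo%E by case: F_proper_convex.
have Hdist : forall al xa, 0 < al -> Ralpha A F al (A x) xa ->
    `|A x - A xa| <= M * al `^ nu.
  move=> al xa al0 H; have := HM _ _ al0 H; rewrite powRN mulrC.
  by rewrite ler_pdivrMr // powR_gt0.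
have M0 : 0 <= M.
  have [y Hy] := R_nonempty (A x) ltr01.
  apply: le_trans (HM _ _ ltr01 Hy).
  by rewrite mulr_ge0 // powR_ge0.
set D := 2 * `|A x - A z0|.
have D0 : 0 <= D by rewrite /D mulr_ge0.
have EB : forall eta : R, 0 < eta -> exists2 delta : R, 0 < delta &
    forall al y, 0 < al -> al < delta -> Ralpha A F al (A x) y ->
    (F y <= (m + eta)%:E)%E /\ `|A x - A y| <= eta.
  move=> eta eta0.
  have den0 : 0 < M * D + D ^+ 2 + M + 1.
    by have := mulr_ge0 M0 D0; have := sqr_ge0 D; lra.
  pose eta' := eta / (M * D + D ^+ 2 + M + 1).
  have eta'0 : 0 < eta' by rewrite /eta' divr_gt0.
  have Eeta : eta' * (M * D + D ^+ 2 + M + 1) = eta.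
    by rewrite /eta' mulrAC -mulrA mulfV ?mulr1 // gt_eqF.
  have [delta d0 Hd] := small_lem nu1 eta'0.
  exists delta => // al y al0 ald Hy.
  have [al1 aleta alnu] := Hd al al0 ald.
  have Halnu : al `^ nu = al * al `^ (nu - 1) by rewrite mulr_powRB1 // ltW.
  have Hb := Hdist _ _ al0 Hy.
  have [s [Fs Hs]] := SG al0 al1 Hy Fz0 Hm Hb (dist_le al0 Hy Fz0 Hm).
  rewrite -/D Halnu in Hs Hb.
  set q := al `^ (nu - 1) in Hs Hb alnu.
  have q0 : 0 <= q by exact: powR_ge0.
  have E1 : M * (al * q) * D / al = M * q * D by field; rewrite gt_eqF.
  rewrite E1 in Hs; clearbody q eta' D.
  have H1 : M * q * D <= M * eta' * D.
    by apply: ler_wpM2r => //; apply: ler_wpM2l.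
  have H2 : al * D ^+ 2 / 2 <= eta' * D ^+ 2.
    have : al * D ^+ 2 <= eta' * D ^+ 2 by apply: ler_wpM2r => //; exact: sqr_ge0.
    have := mulr_ge0 (ltW al0) (sqr_ge0 D); lra.
  have H3 : M * (al * q) <= M * eta'.
    apply: ler_wpM2l => //; have : al * q <= 1 * eta' by apply: ler_pM => //; exact: ltW.
    by rewrite mul1r.
  split.
    rewrite Fs lee_fin.
    have : M * eta' * D + eta' * D ^+ 2 <= eta by rewrite -Eeta; have := mulr_ge0 M0 (ltW eta'0); nra.
    lra.
  rewrite -Eeta; apply: le_trans Hb _; apply: le_trans H3 _.
  have := mulr_ge0 (mulr_ge0 M0 (ltW eta'0)) D0; have := mulr_ge0 (ltW eta'0) (sqr_ge0 D); nra.
pose B := fun delta : R => [set y | exists al, [/\ 0 < al, al < delta & Ralpha A F al (A x) y]].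
pose G := filter_from [set d : R | 0 < d] B.
have FF : Filter G.
  apply: filter_from_filter; first by exists 1; rewrite /= ltr01.
  move=> d1 d2 d10 d20; exists (Num.min d1 d2); first by rewrite /= lt_min d10 d20.
  move=> y [al [al0 ald Hy]]; move: ald; rewrite lt_min => /andP [h1 h2].
  by split; exists al.
have PF : ProperFilter G.
  apply: filter_from_proper => d d0.
  have d20 : 0 < d / 2 by rewrite divr_gt0.
  have [y Hy] := R_nonempty (A x) d20.
  by exists y, (d / 2); split => //; rewrite ltr_pdivrMr // ltr_pMr // ltr1n.
have GEB : forall eta : R, 0 < eta -> forall P : set X,
    (forall y, (F y <= (m + eta)%:E)%E -> `|A x - A y| <= eta -> P y) -> G P.
  move=> eta eta0 P HP; have [delta d0 Hd] := EB eta eta0.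
  exists delta => // y [al [al0 ald Hy]]; have [h1 h2] := Hd _ _ al0 ald Hy.
  exact: HP.
have GK : G [set y | (F y <= (m + 1)%:E)%E].
  exact: (GEB 1 ltr01 [set y | (F y <= (m + 1)%:E)%E] (fun y h _ => h)).
have [z [Kz Cz]] := @F_compact (m + 1) G PF GK.
have [rz Fz] : exists rz : R, F z = rz%:E.
  move: Kz (Hn z); rewrite /=; case: (F z) => // rz; by exists rz.
have rzm : rz <= m.
  apply/ler_addgt0Pr => e e0.
  have Se : [set y | (F y <= (m + e)%:E)%E] z.
    apply: (cluster_closed Cz); first exact: (GEB e e0 [set y | (F y <= (m + e)%:E)%E] (fun y h _ => h)).
    exact: compact_closed X_hausdorff (@F_compact (m + e)).
  by move: Se; rewrite /= Fz lee_fin.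
have Hmin : forall w, (F z <= F w)%E.
  by move=> w; apply: le_trans (Hm w); rewrite Fz lee_fin.
have Hv : forall v, ip (A z) v <= ip (A x) v.
  move=> v; apply/ler_addgt0Pr => e e0.
  pose S := (fun y => ip (A y) v) @^-1` [set r | r <= ip (A x) v + e].
  have cS : closed S.
    by apply: preimage_closed; [move=> y _; exact: A_cont | exact: closed_le].
  have eta0 : 0 < e / (`|v| + 1) by rewrite divr_gt0 // ltr_wpDl.
  have GS : G S.
    apply: (GEB _ eta0 S) => y _ Hy; rewrite /S /=.
    have : ip (A y - A x) v <= e.
      apply: le_trans (ip_le Hip _ _) _.
      rewrite -normrN opprB.
      apply: le_trans (_ : e / (`|v| + 1) * `|v| <= _).
        by apply: ler_wpM2r.
      rewrite mulrAC ler_pdivrMr ?ltr_wpDl // ler_pM2l //; lra.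
    by rewrite ipBl //; lra.
  exact: cluster_closed Cz GS cS.
have Azx : A z = A x.
  have H := Hv (A z - A x).
  have H2 : ip (A z - A x) (A z - A x) <= 0 by rewrite (ipBl Hip); lra.
  rewrite (ip_norm Hip) in H2.
  apply/eqP; rewrite -subr_eq0 -normr_eq0; apply/eqP.
  by have := normr_ge0 (A z - A x); nra.
exists z, (x - z); split => //; split; last by rewrite addrC subrK.
by rewrite linearB /= Azx subrr.
Qed.
End Main.
Unset Implicit Arguments.

Theorem lemma3p6 (R : realType)
  (Xn : completeNormedModType R) (X : tvsType R)
  (iota : {linear Xn -> X}) (iota_bij : bijective iota)
  (X_hausdorff : hausdorff_space X)
  (F : X -> \bar R) (F_proper_convex : proper_convex F)
  (F_compact_sublevels : forall lambda : R, compact [set x | (F x <= lambda%:E)%E])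
  (Y : completeNormedModType R) (ip : Y -> Y -> R)
  (Y_hilbert : inner_product_of_norm ip)
  (A : {linear X -> Y}) (A_cont : tau_weak_continuous ip A) :
  [/\ Kset A F 0 = [set: X],
      (forall nu1 nu2 : R, 0 <= nu1 -> nu1 <= nu2 -> Kset A F nu2 `<=` Kset A F nu1),
      (forall nu : R, 1 < nu ->
         Kset A F nu = [set x | exists z k, (forall w, (F z <= F w)%E) /\
                                               A k = 0 /\ x = z + k]) &
      [set x | exists z k, dom_ext F z /\ A k = 0 /\ x = z + k] `<=` Kset A F (1 / 2)].
Proof.
split.
- exact: (part1 A X_hausdorff F_proper_convex F_compact_sublevels).
- move=> nu1 nu2; exact: (part2 X_hausdorff F_proper_convex F_compact_sublevels).
- move=> nu nu1; apply/seteqP; split.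
    exact: (part3b Y_hilbert A_cont X_hausdorff F_proper_convex F_compact_sublevels nu1).
  exact: (part3a X_hausdorff F_proper_convex F_compact_sublevels nu).
- exact: (part4 X_hausdorff F_proper_convex F_compact_sublevels).
Qed.
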